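(* Let $n\ge 4$ and consider the Markov chain on $\{0,1,\dots,n-1\}$ with $n\times n$ transition probability matrix $\mathbf P=(P_{ij})$ given by: $P_{00}=5/6$, $P_{01}=1/6$; $P_{10}=5/6$, $P_{12}=1/6$; for $2\le i\le n-3$: $P_{i0}=2/3$, $P_{i,i-1}=1/6$, $P_{i,i+1}=1/6$; $P_{n-2,0}=16/21$, $P_{n-2,n-3}=1/6$, $P_{n-2,n-1}=1/14$; $P_{n-1,0}=1/3$, $P_{n-1,n-2}=1/6$, $P_{n-1,n-1}=1/2$; all other entries $0$. Then the steady state probability vector $\vec\pi=(\pi_0,\dots,\pi_{n-1})$ (the unique probability vector with $\vec\pi=\vec\pi\mathbf P$) is $$\vec\pi=\left(\frac{c_n}{\sum_{l=1}^n c_l},\frac{c_{n-1}}{\sum_{l=1}^n c_l},\dots,\frac{c_1}{\sum_{l=1}^n c_l}\right),$$ i.e. $\pi_i=c_{n-i}/\sum_{l=1}^n c_l$ for $i=0,\dots,n-1$.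
   Context: The cobalancing numbers are $b_0=0$, $b_1=0$, $b_{m+1}=6b_m-b_{m-1}+2$ (so $b_2=2$, $b_3=14$). The Lucas-cobalancing numbers are $c_m=\sqrt{8b_m^2+8b_m+1}$ for $m\ge1$; thus $c_1=1$, $c_2=7$, $c_3=41$, and $c_{m+1}=6c_m-c_{m-1}$. *)

(* Defs.v *)
From Stdlib Require Import PeanoNat.
From HB Require Import structures.
From mathcomp Require Import all_boot all_order all_algebra.
Set Implicit Arguments. Unset Strict Implicit. Unset Printing Implicit Defensive.
Import Order.TTheory GRing.Theory Num.Theory.

(* cobalancing numbers: b_0 = 0, b_1 = 0, b_{m+1} = 6 b_m - b_{m-1} + 2.
   bpair m = (b_m, b_{m+1}). The sequence is nondecreasing, so truncated
   subtraction is harmless. *)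
Fixpoint bpair (m : nat) : nat * nat :=
  match m with
  | 0 => (0, 0)
  | m'.+1 => let: (x, y) := bpair m' in (y, 6 * y - x + 2)
  end.
Definition cobal (m : nat) : nat := (bpair m).1.

(* Lucas-cobalancing numbers: c_m = sqrt(8 b_m^2 + 8 b_m + 1) (m >= 1). *)
Definition lcobal (m : nat) : nat :=
  Nat.sqrt (8 * cobal m ^ 2 + 8 * cobal m + 1).

Local Open Scope ring_scope.

Definition Pentry (R : realFieldType) (n i j : nat) : R :=
  if i == 0%N then
    (if j == 0%N then 5/6 else if j == 1%N then 1/6 else 0)
  else if i == 1%N then
    (if j == 0%N then 5/6 else if j == 2%N then 1/6 else 0)
  else if (i <= n - 3)%N then
    (if j == 0%N then 2/3 else if j == i.-1 then 1/6
     else if j == i.+1 then 1/6 else 0)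
  else if i == (n - 2)%N then
    (if j == 0%N then 16/21 else if j == (n - 3)%N then 1/6
     else if j == (n - 1)%N then 1/14 else 0)
  else if i == (n - 1)%N then
    (if j == 0%N then 1/3 else if j == (n - 2)%N then 1/6
     else if j == (n - 1)%N then 1/2 else 0)
  else 0.

Definition Pmat (R : realFieldType) (n : nat) : 'M[R]_n :=
  \matrix_(i < n, j < n) Pentry R n i j.

Definition prob_vec (R : realFieldType) (n : nat) (p : 'rV[R]_n) : Prop :=
  (forall i, 0 <= p 0 i) /\ \sum_(i < n) p 0 i = 1.

Definition pi_vec (R : realFieldType) (n : nat) : 'rV[R]_n :=
  \row_(i < n) ((lcobal (n - i))%:R / \sum_(1 <= l < n.+1) (lcobal l)%:R).

(* Main.v *)
Require Import Defs.
From mathcomp Require Import all_boot all_order all_algebra.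
From mathcomp Require Import zify ring lra.
From Stdlib Require PeanoNat.
Import Order.TTheory GRing.Theory Num.Theory.
Local Open Scope ring_scope.

Fixpoint Bp (m : nat) : int * int :=
  match m with
  | 0%N => (0, 0)
  | m'.+1 => let: (x, y) := Bp m' in (y, 6 * y - x + 2)
  end.

Lemma bpairE m : ((bpair m).1 : int) = (Bp m).1 /\ ((bpair m).2 : int) = (Bp m).2
  /\ 0 <= (Bp m).1 <= (Bp m).2.
Proof.
elim: m => [|m [e1 [e2 h]]] //=.
case: (bpair m) e1 e2 => x y /=; case: (Bp m) h => X Y /= h e1 e2.
split; first by [].
split; last by lia.
lia.
Qed.

Lemma Bp_inv m : let: (X, Y) := Bp m in Y ^+ 2 - 6 * X * Y + X ^+ 2 - 2 * X - 2 * Y = 0.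
Proof.
elim: m => [|m IH] //=; case: (Bp m) IH => X Y IH.
rewrite -IH; ring.
Qed.

Definition Cz (m : nat) : int := let: (X, Y) := Bp m in Y - 3 * X - 1.

Lemma Cz_rec m : Cz m.+2 = 6 * Cz m.+1 - Cz m.
Proof. rewrite /Cz /=; case: (Bp m) => X Y; ring. Qed.

Lemma Cz0 : Cz 0 = -1. Proof. by []. Qed.
Lemma Cz1 : Cz 1 = 1. Proof. by []. Qed.

Lemma Cz_pos m : (0 < m)%N -> 0 < Cz m /\ Cz m <= Cz m.+1.
Proof.
case: m => // m _; elim: m => [|m [h1 h2]]; first by rewrite /Cz /=.
have e1 := Cz_rec m; have e2 := Cz_rec m.+1; split; lia.
Qed.

Lemma cobal_sq m : ((8 * cobal m ^ 2 + 8 * cobal m + 1)%N : int) = Cz m ^+ 2.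
Proof.
rewrite /cobal /Cz; have [e1 _] := bpairE m; have := Bp_inv m.
case: (Bp m) e1 => X Y /= e1 h.
rewrite -[LHS]/((8 * cobal m ^ 2 + 8 * cobal m + 1)%N : int).
rewrite /cobal.
set x := (bpair m).1 in e1 *.
have -> : ((8 * x ^ 2 + 8 * x + 1)%N : int) = 8 * X ^+ 2 + 8 * X + 1.
  by rewrite -e1 -mulnn expr2; lia.
have -> : 8 * X ^+ 2 + 8 * X + 1 = (Y - 3 * X - 1) ^+ 2 - (Y ^+ 2 - 6 * X * Y + X ^+ 2 - 2 * X - 2 * Y) by ring.
by rewrite h subr0.
Qed.

Lemma lcobalE m : (0 < m)%N -> (lcobal m : int) = Cz m.
Proof.
move=> hm; have [hp _] := @Cz_pos m hm.
rewrite /lcobal.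
have hk : ((`|Cz m|%N : nat) : int) = Cz m by rewrite abszE ger0_norm // ltW.
have -> : (8 * cobal m ^ 2 + 8 * cobal m + 1 = `|Cz m| * `|Cz m|)%N.
  by apply/eqP; rewrite -eqz_nat cobal_sq PoszM hk expr2.
rewrite (_ : PeanoNat.Nat.sqrt (`|Cz m| * `|Cz m|)%N = `|Cz m|%N) //.
exact: PeanoNat.Nat.sqrt_square.
Qed.

Section Real.
Variable R : realFieldType.

Definition c (m : nat) : R := (Cz m)%:~R.

Lemma c_rec m : c m.+2 = 6 * c m.+1 - c m.
Proof. by rewrite /c Cz_rec rmorphB rmorphM. Qed.

Lemma c1 : c 1 = 1. Proof. by []. Qed.
Lemma c2 : c 2 = 7. Proof. by []. Qed.
Lemma c0 : c 0 = -1. Proof. by []. Qed.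

Lemma c_gt0 m : (0 < m)%N -> 0 < c m.
Proof. by move=> hm; have [h _] := @Cz_pos m hm; rewrite /c ltr0z. Qed.

Lemma lcobalR m : (0 < m)%N -> (lcobal m)%:R = c m :> R.
Proof. by move=> hm; rewrite /c -lcobalE. Qed.

Lemma c_sum m : 4 * \sum_(i < m.+1) c i.+1 = 5 * c m.+1 - c m - 2.
Proof.
elim: m => [|m IH]; first by rewrite big_ord1 c1 c0; lra.
rewrite big_ord_recr /= mulrDr IH c_rec; lra.
Qed.

Lemma sum_ind N k (q : nat -> R) x :
  \sum_(i < N) q i * (if (i : nat) == k then x else 0) = if (k < N)%N then q k * x else 0.
Proof.
rewrite (eq_bigr (fun i : 'I_N => if (i : nat) == k then q i * x else 0)); last first.
  by move=> i _; case: ifP; rewrite ?mulr0.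
by rewrite -(big_mkcond (fun i : 'I_N => (i : nat) == k)) /= (big_ord1_eq _ (fun j => q j * x)).
Qed.


Ltac splitifs := repeat (case: ifP => ?; try (exfalso; lia)).

Lemma Pcol N i j : (4 <= N)%N -> (i < N)%N -> (0 < j < N)%N ->
  Pentry R N i j =
    (if i == j.-1 then (if j == (N - 1)%N then 1/14 else 1/6) else 0)
  + (if i == j.+1 then 1/6 else 0)
  + (if i == j then (if j == (N - 1)%N then 1/2 else 0) else 0).
Proof.
move=> hN hi hj; rewrite /Pentry.
splitifs; lra.
Qed.

Lemma Pcol0 N i : (4 <= N)%N -> (i < N)%N ->
  Pentry R N i 0 = 2/3 + (if i == 0%N then 1/6 else 0) + (if i == 1%N then 1/6 else 0)
    + (if i == (N - 2)%N then 2/21 else 0) - (if i == (N - 1)%N then 1/3 else 0).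
Proof.
move=> hN hi; rewrite /Pentry.
splitifs; lra.
Qed.


Lemma colsum N (q : nat -> R) j : (4 <= N)%N -> (0 < j < N)%N ->
  \sum_(i < N) q i * Pentry R N i j =
    q j.-1 * (if j == (N - 1)%N then 1/14 else 1/6)
  + (if (j.+1 < N)%N then q j.+1 * (1/6) else 0)
  + q j * (if j == (N - 1)%N then 1/2 else 0).
Proof.
move=> hN hj.
rewrite (eq_bigr (fun i : 'I_N => q i * (if (i : nat) == j.-1 then (if j == (N - 1)%N then 1/14 else 1/6) else 0)
  + q i * (if (i:nat) == j.+1 then 1/6 else 0)
  + q i * (if (i : nat) == j then (if j == (N - 1)%N then 1/2 else 0) else 0))); last first.
  by move=> i _; rewrite Pcol // !mulrDr.
rewrite !big_split /= !sum_ind.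
have -> : (j.-1 < N)%N by lia.
by have -> : (j < N)%N by lia.
Qed.

Lemma colsum0 N (q : nat -> R) : (4 <= N)%N ->
  \sum_(i < N) q i * Pentry R N i 0 =
    2/3 * \sum_(i < N) q i + q 0%N * (1/6) + q 1%N * (1/6) + q (N - 2)%N * (2/21)
    - q (N - 1)%N * (1/3).
Proof.
move=> hN.
rewrite (eq_bigr (fun i : 'I_N => 2/3 * q i + q i * (if (i : nat) == 0%N then 1/6 else 0)
  + q i * (if (i:nat) == 1%N then 1/6 else 0)
  + q i * (if (i : nat) == (N - 2)%N then 2/21 else 0)
  - q i * (if (i : nat) == (N - 1)%N then 1/3 else 0))); last first.
  by move=> i _; rewrite Pcol0 // mulrBr !mulrDr mulrC.
rewrite sumrB !big_split /= !sum_ind -mulr_sumr.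
have -> : (0 < N)%N by lia.
have -> : (1 < N)%N by lia.
have -> : (N - 2 < N)%N by lia.
by have -> : (N - 1 < N)%N by lia.
Qed.

Lemma mulmx_entry N (p : 'rV[R]_N.+1) (q : nat -> R) (j : 'I_N.+1) :
  (forall i : 'I_N.+1, p 0 i = q i) ->
  (p *m Pmat R N.+1) 0 j = \sum_(i < N.+1) q i * Pentry R N.+1 i j.
Proof.
move=> hq; rewrite !mxE; apply: eq_bigr => i _; by rewrite hq mxE.
Qed.


Definition T N := \sum_(i < N) c i.+1.

Lemma S_eq N : \sum_(1 <= l < N.+1) (lcobal l)%:R = T N.
Proof. rewrite big_add1 /= big_mkord; apply: eq_bigr => i _; exact: lcobalR. Qed.

Lemma T_gt0 N : (0 < N)%N -> 0 < T N.
Proof.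
case: N => // N _; rewrite /T big_ord_recl c1; apply: (lt_le_trans ltr01).
rewrite lerDl; apply: sumr_ge0 => i _; exact/ltW/c_gt0.
Qed.

Lemma T_rev N : \sum_(i < N) c (N - i) = T N.
Proof. rewrite (reindex_inj rev_ord_inj) /T; apply: eq_bigr => i _; by rewrite /= subKn. Qed.

Lemma piE N (i : 'I_N) : pi_vec R N 0 i = c (N - i) / T N.
Proof. by rewrite mxE S_eq lcobalR // subn_gt0 ltn_ord. Qed.

Lemma stationary n : (4 <= n.+1)%N -> pi_vec R n.+1 = pi_vec R n.+1 *m Pmat R n.+1.
Proof.
move=> hN; have Tpos := @T_gt0 n.+1 (ltn0Sn n); have Tn0 : T n.+1 != 0 by rewrite gt_eqF.
apply/rowP => j; rewrite (@mulmx_entry n _ (fun k => c (n.+1 - k) / T n.+1)); last exact: piE.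
rewrite piE; have hj := ltn_ord j.
have [j0|jpos] := posnP j.
  rewrite j0 (@colsum0 _ (fun k => c (n.+1 - k) / T n.+1)) //= -mulr_suml T_rev divff // subn0 subSS subn0.
  have -> : (n.+1 - (n.+1 - 2) = 2)%N by lia.
  rewrite subSn // subnn.
  rewrite c2 c1.
  have h := c_sum n.
  have key : c n.+1 = 2/3 * T n.+1 + c n.+1 / 6 + c n / 6 + 2/3 - 1/3 by rewrite /T; lra.
  rewrite {1}key; field; exact: Tn0.
have [jn|jn] := eqVneq (j : nat) n.
  rewrite (@colsum _ (fun k => c (n.+1 - k) / T n.+1)) ?jn //; last by lia.
  have -> : (n == n.+1 - 1)%N by rewrite subn1.
  rewrite ltnn.
  have -> : (n.+1 - n.-1 = 2)%N by lia.
  rewrite subSn // subnn c2 c1; field; exact: Tn0.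
rewrite (@colsum _ (fun k => c (n.+1 - k) / T n.+1)) //; last by lia.
have -> : ((j : nat) == n.+1 - 1)%N = false by apply/negbTE; rewrite subn1.
have -> : (j.+1 < n.+1)%N by lia.
set k := (n - j)%N.
have -> : (n.+1 - j.-1 = k.+2)%N by rewrite /k; lia.
have -> : (n.+1 - j = k.+1)%N by rewrite /k; lia.
have -> : (n.+1 - j.+1 = k)%N by rewrite /k; lia.
rewrite c_rec; field; exact: Tn0.
Qed.


Lemma unique n : (4 <= n.+1)%N -> forall p : 'rV[R]_n.+1,
  prob_vec p -> p = p *m Pmat R n.+1 -> p = pi_vec R n.+1.
Proof.
move=> hN p [_ hsum] hp.
have Tpos := @T_gt0 n.+1 (ltn0Sn n); have Tn0 : T n.+1 != 0 by rewrite gt_eqF.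
pose q k := p 0 (inord k).
have hq : forall i : 'I_n.+1, p 0 i = q i by move=> i; rewrite /q inord_val.
have hcol : forall j, (0 < j < n.+1)%N ->
  q j = q j.-1 * (if j == (n.+1 - 1)%N then 1/14 else 1/6)
  + (if (j.+1 < n.+1)%N then q j.+1 * (1/6) else 0)
  + q j * (if j == (n.+1 - 1)%N then 1/2 else 0).
  move=> j hj; have := congr1 (fun M : 'rV[R]_n.+1 => M 0 (inord j)) hp.
  rewrite /= (@mulmx_entry n p q _ hq) inordK; last by lia.
  move=> h; transitivity (\sum_(i < n.+1) q i * Pentry R n.+1 i j); first exact: h.
  exact: colsum.
pose t := q n.
have claim : forall k, (k.+2 <= n.+1)%N ->
  q (n.+1 - k.+1)%N = c k.+1 * t /\ q (n.+1 - k.+2)%N = c k.+2 * t.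
  elim=> [|k IH] hk.
    rewrite c1 c2 mul1r subSS subn0; split => //.
    have := hcol n; rewrite subn1 /= eqxx ltnn => h.
    have {}h := h ltac:(lia).
    have -> : (n.+1 - 2 = n.-1)%N by lia.
    rewrite /t; lra.
  have [e1 e2] := IH ltac:(lia).
  split; first exact: e2.
  have := hcol (n.+1 - k.+2)%N ltac:(lia).
  have -> : ((n.+1 - k.+2)%N == (n.+1 - 1)%N) = false by apply/negbTE; lia.
  have -> : ((n.+1 - k.+2).+1 < n.+1)%N by lia.
  have -> : ((n.+1 - k.+2).-1 = n.+1 - k.+3)%N by lia.
  have -> : ((n.+1 - k.+2).+1 = n.+1 - k.+1)%N by lia.
  rewrite e1 e2 (c_rec k.+1) => h; lra.
have qE : forall i : 'I_n.+1, q i = c (n.+1 - i) * t.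
  move=> i; have hi := ltn_ord i.
  case E: (n.+1 - i)%N => [|m]; first lia.
  case: m E => [|m] E.
    have -> : (i : nat) = (n.+1 - 1)%N by lia.
    exact: (proj1 (claim 0%N ltac:(lia))).
  have -> : (i : nat) = (n.+1 - m.+2)%N by lia.
  exact: (proj2 (claim m ltac:(lia))).
have ht : T n.+1 * t = 1.
  rewrite -hsum -T_rev mulr_suml; apply: eq_bigr => i _; by rewrite hq qE.
apply/rowP => i; rewrite piE hq qE.
have -> : t = 1 / T n.+1 by rewrite -ht mulrAC divff // mul1r.
by rewrite div1r.
Qed.

End Real.

Theorem theorem3p3 (R : realFieldType) (n : nat) (hn : (4 <= n)%N) :
  (prob_vec (pi_vec R n) /\ pi_vec R n = pi_vec R n *m Pmat R n) /\
  (forall p : 'rV[R]_n, prob_vec p -> p = p *m Pmat R n -> p = pi_vec R n).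
Proof.
case: n hn => [|n] hn //.
have Tpos := @T_gt0 R n.+1 (ltn0Sn n); have Tn0 : T R n.+1 != 0 by rewrite gt_eqF.
split; last exact: unique.
split; last exact: stationary.
split.
  move=> i; rewrite piE; apply: divr_ge0; last exact: ltW.
  apply/ltW/c_gt0; by rewrite subn_gt0.
rewrite (eq_bigr (fun i : 'I_n.+1 => c R (n.+1 - i) / T R n.+1)); last by move=> i _; rewrite piE.
by rewrite -mulr_suml T_rev divff.
Qed.
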